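(* Every finite quasigroup $\langle A;\cdot\rangle$ which is an Abelian algebra is a Hamiltonian algebra.
   Context: A quasigroup is here the algebra $\langle A;\cdot\rangle$ with one binary operation such that for all $a,b\in A$ there are unique $x,y\in A$ with $x\cdot a=b$ and $a\cdot y=b$; its subalgebras are the nonempty subsets closed under $\cdot$. A polynomial operation of an algebra is an operation obtained from a term by substituting elements of the algebra for some of its variables. An algebra is called Abelian if for every polynomial operation $t(x,y_1,\ldots,y_n)$ and all elements $u,v,c_1,\ldots,c_n,d_1,\ldots,d_n$ of the algebra, $t(u,c_1,\ldots,c_n)=t(u,d_1,\ldots,d_n)$ implies $t(v,c_1,\ldots,c_n)=t(v,d_1,\ldots,d_n)$. An algebra is called Hamiltonian if the universe of every subalgebra is an equivalence class (block) of some congruence of the algebra. *)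

(* Defs.v *)
From mathcomp Require Import all_boot.
Set Implicit Arguments. Unset Strict Implicit. Unset Printing Implicit Defensive.

Definition is_quasigroup (A : Type) (op : A -> A -> A) : Prop :=
  forall a b : A, (exists! x, op x a = b) /\ (exists! y, op a y = b).

(* Terms in the language of one binary operation, with variables indexed by
   nat and with constants from A (so their evaluations are exactly the
   polynomial operations). *)
Inductive pterm (A : Type) : Type :=
| PVar of nat
| PCst of A
| POp of pterm A & pterm A.

Fixpoint peval (A : Type) (op : A -> A -> A) (e : nat -> A) (t : pterm A) : A :=
  match t with
  | PVar i => e i
  | PCst a => a
  | POp t1 t2 => op (peval op e t1) (peval op e t2)
  end.

Definition scons (A : Type) (x : A) (c : nat -> A) : nat -> A :=
  fun i => match i with 0 => x | i'.+1 => c i' end.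

Definition abelian_alg (A : Type) (op : A -> A -> A) : Prop :=
  forall (t : pterm A) (u v : A) (c d : nat -> A),
    peval op (scons u c) t = peval op (scons u d) t ->
    peval op (scons v c) t = peval op (scons v d) t.

Definition is_subalgebra (A : finType) (op : A -> A -> A) (S : {set A}) : Prop :=
  S != set0 /\ forall x y, x \in S -> y \in S -> op x y \in S.

Definition is_congruence (A : Type) (op : A -> A -> A) (R : A -> A -> Prop) : Prop :=
  (forall x, R x x) /\ (forall x y, R x y -> R y x) /\
  (forall x y z, R x y -> R y z -> R x z) /\
  (forall x x' y y', R x x' -> R y y' -> R (op x y) (op x' y')).

Definition hamiltonian_alg (A : finType) (op : A -> A -> A) : Prop :=
  forall S : {set A}, is_subalgebra op S ->
    exists R : A -> A -> Prop, is_congruence op R /\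
      exists a : A, forall x : A, x \in S <-> R a x.

(* Main.v *)
Require Import Defs.
From mathcomp Require Import all_boot.
From mathcomp Require Import all_fingroup all_solvable.

Section Aux.
Variable A : finType.
Variable op : A -> A -> A.

Definition NN := #|[set: {perm A}]|.

Lemma NN_gt0 : 0 < NN.
Proof. apply/card_gt0P; exists 1%g; by rewrite inE. Qed.

Lemma iterNN (f : A -> A) : injective f -> forall x, iter NN f x = x.
Proof.
move=> fi x.
have h : ((perm fi) ^+ NN)%g = 1%g by apply: expg_cardG; rewrite inE.
have := permX (perm fi) x NN. rewrite h perm1 => E.
rewrite {2}E; apply: eq_iter => y; by rewrite permE.
Qed.

Definition ld b z := iter NN.-1 (op b) z.
Definition rd a e := iter NN.-1 (fun x => op x e) a.
Definition mm a b c := op (rd a (ld b b)) (ld b c).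

Hypothesis linj : forall b, injective (op b).
Hypothesis rinj : forall e, injective (fun x => op x e).

Lemma ldK b z : op b (ld b z) = z.
Proof. by rewrite /ld -iterS (prednK NN_gt0) iterNN. Qed.
Lemma rdK a e : op (rd a e) e = a.
Proof. by rewrite /rd -(iterS _ (fun x => op x e)) (prednK NN_gt0) iterNN. Qed.
Lemma rdK' a e : rd (op a e) e = a.
Proof. by rewrite /rd -(iterSr _ (fun x => op x e)) (prednK NN_gt0) iterNN. Qed.

Lemma mm_aac a c : mm a a c = c.
Proof.
rewrite /mm. set e := ld a a.
have he : op a e = a by rewrite /e ldK.
by rewrite -{1}he rdK' ldK.
Qed.

Lemma mm_abb a b : mm a b b = a.
Proof. by rewrite /mm rdK. Qed.

Definition ldT (tb tz : pterm A) := iter NN.-1 (fun u => POp tb u) tz.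
Definition rdT (ta te : pterm A) := iter NN.-1 (fun u => POp u te) ta.
Definition mT ta tb tc := POp (rdT ta (ldT tb tb)) (ldT tb tc).

Lemma peval_mT e ta tb tc :
  peval op e (mT ta tb tc) = mm (peval op e ta) (peval op e tb) (peval op e tc).
Proof.
have hl : forall tb tz n, peval op e (iter n (fun u => POp tb u) tz)
   = iter n (op (peval op e tb)) (peval op e tz).
  by move=> ? ? n; elim: n => //= n ->.
have hr : forall ta te n, peval op e (iter n (fun u => POp u te) ta)
   = iter n (fun x => op x (peval op e te)) (peval op e ta).
  by move=> ? ? n; elim: n => //= n ->.
by rewrite /mT /= /rdT /ldT hr !hl.
Qed.

Variable S : {set A}.
Hypothesis Scl : forall x y, x \in S -> y \in S -> op x y \in S.

Lemma mm_S a b c : a \in S -> b \in S -> c \in S -> mm a b c \in S.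
Proof.
have hi : forall f n x, (forall y, y \in S -> f y \in S) -> x \in S -> iter n f x \in S.
  by move=> f n x hf hx; elim: n => //= n IH; apply: hf.
move=> ha hb hc; have hs : forall z, z \in S -> forall y, y \in S -> op y z \in S.
  by move=> z hz y hy; apply: Scl.
have he : ld b b \in S by apply: (hi) => // y hy; apply: Scl.
rewrite /mm; apply: Scl.
  by apply: (hi) => // y hy; apply: Scl.
by apply: (hi) => // y hy; apply: Scl.
Qed.

Variable s0 : A.
Hypothesis s0S : s0 \in S.

Fixpoint abs (t : pterm A) : pterm A :=
  match t with
  | PVar _ => @PVar A 0
  | PCst a => @PVar A (pickle a).+1
  | POp t1 t2 => POp (abs t1) (abs t2)
  end.

Fixpoint subst0 (a : A) (t : pterm A) : pterm A :=
  match t with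
  | PVar 0 => PCst a
  | PVar i => @PVar A i
  | PCst b => PCst b
  | POp t1 t2 => POp (subst0 a t1) (subst0 a t2)
  end.

Definition cO (i : nat) : A := odflt s0 (unpickle i).
Definition cS (i : nat) : A := s0.

Lemma abs_eval x t : peval op (scons x cO) (abs t) = peval op (fun _ => x) t.
Proof. elim: t => //= [a|t1 -> t2 ->] //. by rewrite /cO pickleK. Qed.

Lemma abs_S x t : x \in S -> peval op (scons x cS) (abs t) \in S.
Proof. move=> hx; elim: t => //= t1 h1 t2 h2; exact: Scl. Qed.

Lemma subst0_eval a x w t : peval op (scons x w) (subst0 a t) = peval op (scons a w) t.
Proof. elim: t => //= [[|i]|t1 -> t2 ->] //. Qed.

Lemma key (ab : abelian_alg op) t s1 s2 : s1 \in S -> s2 \in S ->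
  peval op (fun _ => s1) t \in S -> peval op (fun _ => s2) t \in S.
Proof.
move=> h1 h2 hy.
set T := abs t.
set y := peval op (scons s1 cO) T.
pose P := mT T (subst0 s1 T) (PCst y).
have E : forall x w, peval op (scons x w) P =
   mm (peval op (scons x w) T) (peval op (scons s1 w) T) y.
  by move=> x w; rewrite /P peval_mT subst0_eval.
have := ab P s1 s2 cO cS.
rewrite !E !mm_aac => /(_ erefl).
rewrite /y mm_abb abs_eval => ->.
apply: mm_S; try exact: abs_S.
by rewrite abs_eval.
Qed.

End Aux.

Section Clos.
Variable A : Type.
Variable R : A -> A -> Prop.
Inductive rtc : A -> A -> Prop :=
| rtc_refl x : rtc x x
| rtc_step x y z : R x y -> rtc y z -> rtc x z.

Lemma rtc_trans x y z : rtc x y -> rtc y z -> rtc x z.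
Proof. by elim=> // a b c hab _ IH hc; apply: rtc_step hab (IH hc). Qed.

Lemma rtc_sym : (forall x y, R x y -> R y x) -> forall x y, rtc x y -> rtc y x.
Proof.
move=> hs x y; elim=> [a|a b c hab _ IH]; first exact: rtc_refl.
apply: rtc_trans IH _; apply: rtc_step (hs _ _ hab) (rtc_refl _).
Qed.
End Clos.

Theorem mainTheorem9 (A : finType) (op : A -> A -> A) :
  is_quasigroup op -> abelian_alg op -> hamiltonian_alg op.
Proof.
move=> q ab S [SN Scl].
have linj : forall b, injective (op b).
  move=> b y1 y2 e. have [_ [y [_ u]]] := q b (op b y1).
  by rewrite -(u y1 erefl) (u y2 (esym e)).
have rinj : forall e, injective (fun x => op x e).
  move=> e x1 x2 /= h. have [[x [_ u]] _] := q e (op x1 e).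
  by rewrite -(u x1 erefl) (u x2 (esym h)).
have [s0 s0S] : exists s0, s0 \in S.
  by case/set0Pn: SN => s hs; exists s.
pose R0 := fun x y : A => exists t s1 s2, [/\ s1 \in S, s2 \in S,
   x = peval op (fun _ => s1) t & y = peval op (fun _ => s2) t].
have R0s : forall x y, R0 x y -> R0 y x.
  by move=> x y [t [s1 [s2 [? ? ? ?]]]]; exists t, s2, s1.
have R0l : forall x x' y, R0 x x' -> R0 (op x y) (op x' y).
  move=> x x' y [t [s1 [s2 [? ? -> ->]]]]; exists (POp t (PCst y)), s1, s2; by split.
have R0r : forall x y y', R0 y y' -> R0 (op x y) (op x y').
  move=> x y y' [t [s1 [s2 [? ? -> ->]]]]; exists (POp (PCst x) t), s1, s2; by split.
exists (@rtc A R0); split.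
  split; first exact: rtc_refl.
  split; first exact: rtc_sym.
  split; first exact: rtc_trans.
  move=> x x' y y' hx hy.
  apply: (@rtc_trans _ _ _ (op x' y)).
    elim: hx {hy} => [a|a b c hab _ IH]; first exact: rtc_refl.
    exact: rtc_step (R0l _ _ _ hab) IH.
  elim: hy {hx} => [a|a b c hab _ IH]; first exact: rtc_refl.
  exact: rtc_step (R0r _ _ _ hab) IH.
exists s0 => x; split.
  move=> hx; apply: rtc_step (@rtc_refl A R0 x).
  by exists (@PVar A 0), s0, x.
move=> h.
suff : forall a b, @rtc A R0 a b -> a \in S -> b \in S by move/(_ _ _ h s0S).
move=> a b; elim=> // c d e [t [s1 [s2 [h1 h2 -> ->]]]] _ IH hc.
apply: IH; exact: (@key A op linj rinj S Scl s0 s0S ab _ _ _ h1 h2 hc).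
Qed.
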